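(* If $2 \leq a < b$, then $I_{a,b} \leq a^{a+b-2}$.
   Context: $K_{a,b}$ is the complete bipartite graph with partite sets of sizes $a$ and $b$. $I_{a,b}$ denotes the number of isomorphism classes (as unlabeled graphs) of spanning trees of $K_{a,b}$. *)

(* Defs.v *)
From mathcomp Require Import all_boot all_fingroup.
Set Implicit Arguments. Unset Strict Implicit. Unset Printing Implicit Defensive.

Definition vert (a b : nat) : finType := ('I_a + 'I_b)%type.

(* A spanning subgraph of K_{a,b} is given by its edge set, a set of pairs
   (i, j) with i in the first part and j in the second part. *)
Definition adj (a b : nat) (T : {set 'I_a * 'I_b}) : rel (vert a b) :=
  fun u v => match u, v with
             | inl i, inr j => (i, j) \in T
             | inr j, inl i => (i, j) \in T
             | _, _ => false
             end.

Definition connected_sub (a b : nat) (T : {set 'I_a * 'I_b}) : bool :=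
  [forall u : vert a b, forall v : vert a b, connect (adj T) u v].

(* T is a spanning tree: connected and acyclic, where acyclicity is expressed
   as "every edge is a bridge" (deleting any edge disconnects its endpoints). *)
Definition spanning_tree (a b : nat) (T : {set 'I_a * 'I_b}) : bool :=
  connected_sub T &&
  [forall e in T, ~~ connect (adj (T :\ e)) (inl e.1 : vert a b) (inr e.2)].

(* Isomorphism as unlabeled graphs: a bijection of the vertex set (not
   required to respect the bipartition) carrying edges exactly onto edges. *)
Definition graph_iso (a b : nat) (T1 T2 : {set 'I_a * 'I_b}) : bool :=
  [exists s : {perm vert a b},
     [forall u : vert a b, forall v : vert a b, adj T1 u v == adj T2 (s u) (s v)]].

Definition spanning_trees (a b : nat) : {set {set 'I_a * 'I_b}} :=
  [set T | spanning_tree T].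

Definition I_ab (a b : nat) : nat :=
  #|[set [set T' in spanning_trees a b | graph_iso T T'] | T in spanning_trees a b]|.

(* Main.v *)
Require Import Defs.
From mathcomp Require Import all_boot all_fingroup zify.
Set Implicit Arguments. Unset Strict Implicit. Unset Printing Implicit Defensive.
Section Dist.
Variables (V : finType) (e : rel V) (r : V).
Definition Pd n v := [exists t : n.-tuple V, path e r t && (last r t == v)].
Definition dd v := find (fun n => Pd n v) (iota 0 #|V|).

Lemma Pd_conn v : connect e r v -> has (fun n => Pd n v) (iota 0 #|V|).
Proof.
case/connectP => p pp ->.
case: (shortenP pp) => p' pp' up' _.
apply/hasP; exists (size p').
  rewrite mem_iota /= add0n.
  move/card_uniqP: up' => /= h.
  by rewrite -h max_card.
apply/existsP; exists (in_tuple p'); by rewrite /= pp' eqxx.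
Qed.

Lemma dd_spec v : connect e r v -> Pd (dd v) v /\ dd v < #|V|.
Proof.
move=> /Pd_conn h; have := nth_find 0 h; rewrite has_find size_iota in h.
by rewrite nth_iota ?size_iota // add0n; split.
Qed.

Lemma dd_min v n : Pd n v -> n < #|V| -> dd v <= n.
Proof.
move=> h hn; rewrite leqNgt; apply/negP => hlt.
have := before_find 0 hlt; rewrite nth_iota ?add0n ?h //.
Qed.

Hypothesis conn : forall v, connect e r v.

Lemma par_ex v : v != r -> exists w, e w v && (dd w < dd v).
Proof.
move=> vr; have [/existsP[t /andP[pt /eqP lt]] hv] := dd_spec (conn v).
have st := size_tuple t.
move: (tval t) pt lt st => s.
case/lastP: s => [|p x] /=; first by move=> _ h; rewrite h eqxx in vr.
rewrite rcons_path last_rcons size_rcons => /andP[pp ex] xv sz; subst v.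
exists (last r p); rewrite ex /=.
have : dd (last r p) <= size p.
  apply: dd_min; last by apply: ltn_trans hv; rewrite -sz.
  by apply/existsP; exists (in_tuple p); rewrite /= pp eqxx.
by rewrite -sz ltnS.
Qed.

Definition par v := odflt r [pick w | e w v && (dd w < dd v)].

Lemma par_spec v : v != r -> e (par v) v && (dd (par v) < dd v).
Proof.
move=> vr; rewrite /par; case: pickP => [w -> //|H].
by have [w] := par_ex vr; rewrite H.
Qed.

Lemma chain (e' : rel V) : (forall w, w != r -> e' (par w) w) -> forall v, connect e' r v.
Proof.
move=> H v; move: {2}(dd v).+1 (ltnSn (dd v)) => n; elim: n v => // n IH v hv.
case: (eqVneq v r) => [->|vr]; first exact: connect0.
apply: connect_trans (connect1 (H v vr)).
apply: IH; have /andP[_ h] := par_spec vr; exact: leq_trans h hv.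
Qed.
End Dist.

Lemma adj_sym a b (T : {set 'I_a * 'I_b}) : symmetric (adj T).
Proof. by case=> [i|j] [i'|j']. Qed.

Section Tree.
Variables (a b : nat) (T : {set 'I_a * 'I_b}) (i0 : 'I_a).
Hypothesis hT : spanning_tree T.
Definition rt : vert a b := inl i0.
Definition pr := par (adj T) rt.

Lemma connT v : connect (adj T) rt v.
Proof. by case/andP: hT => /forallP/(_ rt)/forallP/(_ v). Qed.

Lemma pr_adj v : v != rt -> adj T (pr v) v.
Proof. by move=> h; case/andP: (par_spec connT h). Qed.

Lemma charT i j : ((i, j) \in T) =
  (pr (inr j) == inl i) || ((i != i0) && (pr (inl i) == inr j)).
Proof.
apply/idP/idP; last first.
  case/orP => [/eqP h| /andP[h1 /eqP h2]].
    by have := pr_adj (v := inr j) isT; rewrite h.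
  have : inl i != rt by rewrite /rt; apply: contra h1 => /eqP[->].
  by move/pr_adj; rewrite h2.
move=> ijT; apply/negPn/negP; rewrite negb_or negb_and negbK => /andP[h1 h2].
case/andP: hT => _ /forall_inP/(_ _ ijT) /=; apply/negP/negPn.
set e' := adj (T :\ (i, j)).
have H : forall w, w != rt -> e' (pr w) w.
  move=> w wr; have := pr_adj wr.
  rewrite /e'; case: w wr => [i'|j'] wr; case E: (pr _) => [i2|j2] //= h;
  rewrite !inE h ?andbT; apply/negP => /eqP [e1 e2]; subst.
    by move: h2; rewrite E eqxx orbF; move=> /eqP eq; rewrite eq eqxx in wr.
  by rewrite E eqxx in h1.
have c1 := chain connT H (inl i); have c2 := chain connT H (inr j).
apply: connect_trans _ c2; by rewrite (sym_connect_sym (adj_sym _)).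
Qed.
End Tree.
Lemma idx_rev_undup (T : eqType) (x0 : T) s k : k < size s ->
  index (nth x0 s k) (rev (undup s)) <= size s - k.+1.
Proof.
elim: s k => [|y s IH] k //= hk.
have hrc : forall x l, x \in l -> index x (rcons l y) = index x l.
  by move=> x l xl; rewrite -cats1 index_cat xl.
case: k hk => [|k] hk /=.
  case: ifP => ys.
    have := IH (index y s); rewrite index_mem ys nth_index // => /(_ isT) h.
    apply: leq_trans h _; lia.
  rewrite rev_cons -cats1 index_cat mem_rev mem_undup ys /= size_rev eqxx addn0.
  by rewrite subn1; exact: size_undup.
have ks : k < size s by [].
case: ifP => ys; first by rewrite subSS; exact: IH.
rewrite rev_cons hrc; first by rewrite subSS; exact: IH.
by rewrite mem_rev mem_undup mem_nth.
Qed.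

Section Canon.
Variables (a' b : nat) (q : 'I_a'.+1 -> 'I_b).
Definition sq := mkseq (fun k => q (inord (a' - k))) a'.
Definition Lq := rev (undup sq).
Definition fullq := Lq ++ [seq j <- enum 'I_b | j \notin Lq].

Lemma fullq_perm : perm_eq fullq (enum 'I_b).
Proof.
apply: uniq_perm; last by move=> j; rewrite mem_cat mem_filter mem_enum andbT orbN.
  rewrite cat_uniq rev_uniq undup_uniq filter_uniq ?enum_uniq //= andbT.
  by apply/hasPn => j; rewrite mem_filter => /andP[].
exact: enum_uniq.
Qed.

Lemma idx_lt j : index j fullq < b.
Proof.
rewrite -{2}(size_enum_ord b) -(perm_size fullq_perm) index_mem.
by rewrite (perm_mem fullq_perm) mem_enum.
Qed.

Definition sig_f j : 'I_b := Ordinal (idx_lt j).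
Lemma sig_inj : injective sig_f.
Proof.
move=> x y [] h.
have mx : forall z, z \in fullq by move=> z; rewrite (perm_mem fullq_perm) mem_enum.
by rewrite -(nth_index x (mx x)) h nth_index.
Qed.
Definition sig := perm sig_inj.

Lemma sig_q (i : 'I_a'.+1) : i != ord0 -> sig (q i) < i.
Proof.
move=> i0; rewrite permE /sig_f /= /fullq index_cat.
have hi : 0 < (i : nat) by case: i i0 => [[|n] ?].
have hk : a' - i < size sq by rewrite size_mkseq; move: (ltn_ord i) hi; lia.
have e : nth (q i) sq (a' - i) = q i.
  rewrite nth_mkseq; last by rewrite size_mkseq in hk.
  congr q; apply: val_inj; rewrite /= inordK; move: (ltn_ord i); lia.
have : q i \in Lq by rewrite mem_rev mem_undup -e mem_nth.
move=> ->; have := idx_rev_undup (q i) hk; rewrite e size_mkseq.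
move: (ltn_ord i) hi; rewrite /Lq; lia.
Qed.
End Canon.
Lemma prod_maxn n : \prod_(i < n.+1) maxn i 1 = n`!.
Proof.
elim: n => [|n IH]; first by rewrite big_ord1.
rewrite big_ord_recr /= IH factS mulnC; congr (_ * _); lia.
Qed.

Lemma expn_mono m k e : m <= k -> m ^ e <= k ^ e.
Proof. by move=> h; elim: e => // e IH; rewrite !expnS leq_mul. Qed.

Lemma fact_bound n : 0 < n -> n`! <= n.+1 ^ n.-1.
Proof.
elim: n => [|[|n] IH] //= _.
rewrite factS expnS; apply: leq_mul => //.
apply: leq_trans (IH isT) _; exact: expn_mono.
Qed.

Lemma card_fam A B : #|[set q : {ffun 'I_A.+1 -> 'I_B} | q \in family (fun i : 'I_A.+1 => [pred j : 'I_B | j < maxn i 1])]| <= A`!.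
Proof.
rewrite cardsE card_family -prod_maxn foldrE big_map.
rewrite big_enum /=.
rewrite [X in _ <= X](eq_bigl (fun i => i \in 'I_A.+1)) //; apply: leq_prod => i _.
set m := maxn i 1.
rewrite cardE -(size_map val); apply: (@leq_trans (size (iota 0 m))); last by rewrite size_iota.
apply: uniq_leq_size; first by rewrite (map_inj_uniq val_inj) enum_uniq.
by move=> x /mapP [y]; rewrite mem_enum => hy ->; rewrite mem_iota.
Qed.

Section Tree2.
Variables (a b : nat) (T : {set 'I_a * 'I_b}) (i0 : 'I_a) (j0 : 'I_b).
Hypothesis hT : spanning_tree T.
Definition pf (j : 'I_b) : 'I_a := if pr T i0 (inr j) is inl i then i else i0.
Definition qf (i : 'I_a) : 'I_b := if pr T i0 (inl i) is inr j then j else j0.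

Lemma charT2 i j : ((i, j) \in T) = (pf j == i) || ((i != i0) && (qf i == j)).
Proof.
rewrite (@charT _ _ T i0 hT) /pf /qf.
have h1 := @pr_adj _ _ T i0 hT (inr j) isT.
case: (pr T i0 (inr j)) h1 => [i'|j'] // _.
congr orb.
case: eqVneq => //= ii0.
have hne : inl i != rt b i0 by rewrite /rt; apply/eqP => -[]; apply/eqP.
have h2 := @pr_adj _ _ T i0 hT _ hne.
by case: (pr T i0 (inl i)) h2 => [i''|j''] //= _; apply/eqP/eqP => [[]|->].
Qed.
End Tree2.

Definition Tof a b (i0 : 'I_a) (c : {ffun 'I_b -> 'I_a} * {ffun 'I_a -> 'I_b}) : {set 'I_a * 'I_b} :=
  [set x | (c.1 x.2 == x.1) || ((x.1 != i0) && (c.2 x.1 == x.2))].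

Definition liftf a b (s : {perm 'I_b}) (u : vert a b) : vert a b :=
  match u with inl i => inl i | inr j => inr (s j) end.
Lemma liftf_inj a b s : injective (@liftf a b s).
Proof. case=> [i|j] [i'|j'] //= [] => h; first by rewrite (perm_inj h). Qed.
Definition liftp a b s := perm (@liftf_inj a b s).

Lemma iso_Tof a b (T : {set 'I_a * 'I_b}) i0 j0 (s : {perm 'I_b}) : spanning_tree T ->
  graph_iso T (Tof i0 ([ffun j => pf T i0 ((s^-1)%g j)], [ffun i => if i == i0 then j0 else s (qf T i0 j0 i)])).
Proof.
move=> hT; apply/existsP; exists (@liftp a b s); apply/forallP => u; apply/forallP => v.
rewrite !permE; case: u => [i|j]; case: v => [i'|j'] //=; rewrite inE /= !ffunE permK (@charT2 _ _ T i0 j0 hT);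
  by case: (eqVneq _ i0) => //= _; rewrite (inj_eq perm_inj).
Qed.

Lemma iso_sym a b (T1 T2 : {set 'I_a * 'I_b}) : graph_iso T1 T2 -> graph_iso T2 T1.
Proof.
case/existsP => s /forallP H; apply/existsP; exists (s^-1)%g; apply/forallP => u; apply/forallP => v.
by have /forallP/(_ ((s^-1)%g v)) := H ((s^-1)%g u); rewrite !permKV eq_sym.
Qed.

Lemma iso_trans a b (T1 T2 T3 : {set 'I_a * 'I_b}) : graph_iso T1 T2 -> graph_iso T2 T3 -> graph_iso T1 T3.
Proof.
case/existsP => s /forallP H1; case/existsP => t /forallP H2.
apply/existsP; exists (s * t)%g; apply/forallP => u; apply/forallP => v.
have /forallP/(_ v)/eqP -> := H1 u.
by have /forallP/(_ (s v)) := H2 (s u); rewrite !permM.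
Qed.

Theorem theorem2p6 (a b : nat) : 2 <= a -> a < b -> I_ab a b <= a ^ (a + b - 2).
Proof.
case: a => [|A] //; case: b => [|B] // ha hab.
set F := fun i : 'I_A.+1 => [pred j : 'I_B.+1 | j < maxn i 1].
set C := setX [set: {ffun 'I_B.+1 -> 'I_A.+1}] [set q : {ffun 'I_A.+1 -> 'I_B.+1} | q \in family F].
set cls := fun T : {set 'I_A.+1 * 'I_B.+1} => [set T' in spanning_trees A.+1 B.+1 | graph_iso T T'].
apply: (@leq_trans #|C|).
  apply: leq_trans (subset_leq_card (_ : _ \subset [set cls (Tof ord0 c) | c in C])) (leq_imset_card _ _).
  apply/subsetP => X /imsetP [T hT ->]; rewrite inE in hT.
  set q := qf T ord0 ord0; set s := sig q.
  apply/imsetP; exists ([ffun j => pf T ord0 ((s^-1)%g j)], [ffun i => if i == ord0 then ord0 else s (q i)]).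
    rewrite in_setX inE /= inE; apply/familyP => i; rewrite /F inE ffunE.
    case: eqVneq => [-> //|ne]; apply: leq_trans (@sig_q _ _ q i ne) _; exact: leq_maxl.
  have iso := @iso_Tof _ _ T ord0 ord0 s hT.
  apply/setP => T'; rewrite !inE; apply/andP/andP => [[h1 h2]|[h1 h2]]; split => //.
    exact: iso_trans (iso_sym iso) h2.
  exact: iso_trans iso h2.
rewrite cardsX cardsT card_ffun !card_ord.
apply: leq_trans (leq_mul (leqnn _) (leq_trans (card_fam A B.+1) (fact_bound (n := A) _))) _ => //.
rewrite -expnD; apply: leq_pexp2l => //; lia.
Qed.
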